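(* For every standard allocation rule $f$, the mechanism $\mathrm{Truthful}(f)$ is individually rational, truthful and budget feasible. Precisely, for every instance and every seller $i$: (a) $P_{i,r_i}(c_i)\ge c_if_{r_i}(c_i/u_i)$; (b) for every report $\bar c_i\ge0$, $P_{i,r_i}(\bar c_i)-c_if_{r_i}(\bar c_i/u_i)\le P_{i,r_i}(c_i)-c_if_{r_i}(c_i/u_i)$, where $r_i$ depends only on the other sellers' costs; and (c) $\sum_{i\in S}P_{i,r_i}(c_i)\le B$.
   Context: Setting: a buyer with budget $B>0$ faces a finite set $S$ of sellers; seller $i$ owns one divisible item giving utility $u_i>0$ and has private cost $c_i\ge0$; buying fraction $x_i\in[0,1]$ costs $x_ic_i$. A standard allocation rule is a non-increasing $f:[0,\infty)\to[0,1]$ with $f(0)=1$, $f(e-1)=0$. For $r>0$: $f_r(x)=f(x/r)$, $Q_r(x)=xf_r(x)+\int_x^\infty f_r(y)\,dy$, $P_{i,r}(x)=u_iQ_r(x/u_i)$. $\mathrm{EnvyFree}(f)$ on cost vector $c$ has stopping rate the value at which, decreasing $r$ from $\infty$, the nondecreasing function $r\mapsto\sum_iP_{i,r}(c_i)$ first equals $B$. $\mathrm{Truthful}(f)$ on reported costs $c$: for each $i$, $r_i$ is the stopping rate of $\mathrm{EnvyFree}(f)$ on the cost vector obtained from $c$ by setting the $i$-th cost to $0$ (so $r_i$ does not depend on $i$'s report); it buys $f_{r_i}(c_i/u_i)$ of item $i$ and pays $P_{i,r_i}(c_i)$ to seller $i$. *)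

(* Defs.v *)
From HB Require Import structures.
From mathcomp Require Import all_boot all_order all_algebra.
From mathcomp Require Import all_classical all_reals all_analysis.
Set Implicit Arguments. Unset Strict Implicit. Unset Printing Implicit Defensive.
Import Order.TTheory GRing.Theory Num.Theory.
Import numFieldNormedType.Exports.
Local Open Scope classical_set_scope.
Local Open Scope ring_scope.

Section Defs.
Variable R : realType.

(* standard allocation rule: f : [0,oo) -> [0,1] non-increasing, f 0 = 1,
   f (e - 1) = 0.  Values of f on negative arguments are irrelevant. *)
Definition std_alloc (f : R -> R) : Prop :=
  [/\ (forall x, 0 <= x -> 0 <= f x <= 1),
      (forall x y, 0 <= x -> x <= y -> f y <= f x),
      f 0 = 1 & f (expR 1 - 1) = 0].

Definition fr (f : R -> R) (r : R) (x : R) : R := f (x / r).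

Definition Q (f : R -> R) (r x : R) : R :=
  x * fr f r x + Rintegral lebesgue_measure `[x, +oo[ (fr f r).

Definition P (f : R -> R) (ui r x : R) : R := ui * Q f r (x / ui).

Definition total_pay (f : R -> R) (I : finType) (u c : I -> R) (r : R) : R :=
  \sum_(i : I) P f (u i) r (c i).

(* stopping rate of EnvyFree(f) on cost vector c: decreasing r from +oo,
   the first value at which total_pay equals B, i.e. the largest r > 0
   with total_pay r = B. *)
Definition stopping_rate (f : R -> R) (I : finType) (u c : I -> R) (B r : R)
  : Prop :=
  0 < r /\ total_pay f u c r = B /\
  (forall r', r < r' -> total_pay f u c r' <> B).

Definition zero_at (I : finType) (c : I -> R) (i : I) : I -> R :=
  fun j => if j == i then 0 else c j.

End Defs.

(* Main.v *)
Require Import Defs.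
From HB Require Import structures.
From mathcomp Require Import all_boot all_order all_algebra.
From mathcomp Require Import all_classical all_reals all_analysis.
From mathcomp Require Import measurable_realfun lra.
Set Implicit Arguments. Unset Strict Implicit. Unset Printing Implicit Defensive.
Import Order.TTheory GRing.Theory Num.Theory.
Import numFieldNormedType.Exports.
Local Open Scope classical_set_scope.
Local Open Scope ring_scope.

Section G.
Variable R : realType.
Notation mu := (@lebesgue_measure R).
Variables (g : R -> R) (M : R).
Hypothesis M0 : 0 <= M.
Hypothesis g01 : forall y, 0 <= y -> 0 <= g y <= 1.
Hypothesis gni : forall y z, 0 <= y -> y <= z -> g z <= g y.
Hypothesis gM : forall y, M <= y -> g y = 0.

Definition I (a : R) := Rintegral mu `[a, +oo[ g.

Lemma g_meas (D : set R) : measurable D -> (forall y, D y -> 0 <= y) -> measurable_fun D g.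
Proof.
move=> mD D0.
apply: (@eq_measurable_fun _ _ _ _ D (fun y => g (Num.max y 0))).
  move=> y /[!inE] /D0 y0; by rewrite max_l.
apply: nonincreasing_measurable => // y z yz.
apply: gni; first by rewrite le_max lexx orbT.
by rewrite le_max2 ?lexx.
Qed.

Lemma g_int (D : set R) : measurable D -> (forall y, D y -> 0 <= y) ->
  mu.-integrable D (EFin \o g).
Proof.
move=> mD D0.
apply: (@le_integrable _ _ _ mu D mD _ (EFin \o (\1_`[0, M] : R -> R))).
- by apply/measurable_EFinP; apply: g_meas.
- move=> y Dy /=; rewrite /indic lee_fin; have y0 := D0 _ Dy.
  have /andP[g0 g1] := g01 y0.
  case: (leP y M) => yM.
    rewrite mem_set /=; last by rewrite in_itv /= y0 yM.
    by rewrite normr1 ger0_norm.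
  rewrite memNset /=; last by rewrite in_itv /= y0 /= leNgt yM.
  by rewrite normr0 gM ?normr0 // ltW.
- apply/integrableP; split.
    by apply/measurable_EFinP; apply: measurable_indic.
  under eq_integral do rewrite /= ger0_norm ?indic_ge0 //.
  rewrite integral_indic //.
  apply: (le_lt_trans (measureIl _ _ _)) => //.
  have := @lebesgue_measure_itv R `[0, M]%R => /= ->.
  by case: ifP => _; rewrite ?ltry.
Qed.

Lemma I_split a x : 0 <= a -> a <= x ->
  I a - I x = Rintegral mu `[a, x] g.
Proof.
move=> a0 ax; rewrite /I.
have H := @Rintegral_itvB R g (BLeft a) (BInfty _ false) x.
rewrite (@Rintegral_itv_obnd_cbnd R x) in H; last first.
  apply: g_int => // y /=; rewrite in_itv /= andbT => /ltW xy; exact: le_trans (le_trans a0 ax) xy.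
have := H (g_int (measurable_itv _) _) _ _.
move=> {}H; rewrite -H.
- lra.
- by move=> y /=; rewrite in_itv /= andbT; exact: le_trans.
- by rewrite bnd_simp.
- by [].
Qed.

Lemma mu_itv a x : a <= x -> fine (mu `[a, x]) = x - a.
Proof.
move=> ax; have := @lebesgue_measure_itv R `[a, x]%R => /= ->.
case: ifP => [_|/negbT]; first by [].
rewrite lte_fin -leNgt => xa; have -> : x = a by apply/le_anti; rewrite xa ax.
by rewrite subrr.
Qed.

Lemma I_bounds a x : 0 <= a -> a <= x ->
  (x - a) * g x <= Rintegral mu `[a, x] g <= (x - a) * g a.
Proof.
move=> a0 ax.
have D0 : forall y, `[a, x]%classic y -> 0 <= y.
  by move=> y /=; rewrite in_itv /= => /andP[ay _]; exact: le_trans ay.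
have icst c : mu.-integrable `[a, x]%classic (EFin \o (fun=> c)).
  apply/integrableP; split; first exact: measurable_cst.
  rewrite integral_cst //=; have := @lebesgue_measure_itv R `[a, x]%R => /= ->.
  by case: ifP => _; rewrite ?mule0 ?ltry // -EFinM ltry.
apply/andP; split.
- rewrite mulrC -(mu_itv ax) -Rintegral_cst //.
  apply: le_Rintegral => //; first exact: g_int.
  move=> y /=; rewrite in_itv /= => /andP[ay yx]; apply: gni => //.
  exact: le_trans ay.
- rewrite mulrC -(mu_itv ax) -Rintegral_cst //.
  apply: le_Rintegral => //; first exact: g_int.
  move=> y /=; rewrite in_itv /= => /andP[ay yx]; exact: gni.
Qed.

Lemma util a x : 0 <= a -> 0 <= x -> (x - a) * g x + I x <= I a.
Proof.
move=> a0 x0; case: (leP a x) => ax.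
  have := I_split a0 ax; have /andP[h _] := I_bounds a0 ax.
  move=> e; rewrite -e in h; lra.
have xa := ltW ax.
have := I_split x0 xa; have /andP[_ h] := I_bounds x0 xa.
move=> e; rewrite -e in h; lra.
Qed.

Lemma I_ge0 a : 0 <= a -> 0 <= I a.
Proof.
move=> a0; apply: Rintegral_ge0 => y /=; rewrite in_itv /= andbT => ay.
by have /andP[] := g01 (le_trans a0 ay).
Qed.
End G.

Section Main.
Variable R : realType.
Notation mu := (@lebesgue_measure R).
Variable f : R -> R.
Hypothesis hf : std_alloc f.

Lemma e1_ge0 : 0 <= expR 1 - 1 :> R.
Proof. have := expR_ge1Dx (1 : R); lra. Qed.

Section Rfix.
Variable r : R.
Hypothesis r0 : 0 < r.

Lemma fr01 y : 0 <= y -> 0 <= fr f r y <= 1.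
Proof. case: hf => h _ _ _ y0; apply: h; exact: divr_ge0 (ltW r0). Qed.

Lemma frni y z : 0 <= y -> y <= z -> fr f r z <= fr f r y.
Proof.
case: hf => _ h _ _ y0 yz; apply: h; first exact: divr_ge0 (ltW r0).
by rewrite ler_pM2r // invr_gt0.
Qed.

Lemma frM y : r * (expR 1 - 1) <= y -> fr f r y = 0.
Proof.
case: hf => h1 h2 _ he yM.
have M0 : 0 <= r * (expR 1 - 1) by rewrite mulr_ge0 // ?ltW // e1_ge0.
apply/le_anti/andP; split; last first.
  by have /andP[] := h1 (y / r) (divr_ge0 (le_trans M0 yM) (ltW r0)).
rewrite /fr -he; apply: h2; first exact: e1_ge0.
by rewrite ler_pdivlMr // mulrC.
Qed.

Lemma M0 : 0 <= r * (expR 1 - 1).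
Proof. by rewrite mulr_ge0 // ?ltW // e1_ge0. Qed.

Lemma utilP u c cb : 0 < u -> 0 <= c -> 0 <= cb ->
  P f u r cb - c * fr f r (cb / u) <= P f u r c - c * fr f r (c / u).
Proof.
move=> u0 c0 cb0.
have a0 : 0 <= c / u by rewrite divr_ge0 // ltW.
have x0 : 0 <= cb / u by rewrite divr_ge0 // ltW.
have H := util fr01 frni frM a0 x0.
have {}H := ler_wpM2l (ltW u0) H.
rewrite /P /Q -/(I (fr f r) (cb / u)) -/(I (fr f r) (c / u)).
have ce : c = u * (c / u) by rewrite mulrCA divff ?mulr1 // gt_eqF.
move: H ce; set a := c / u; set x := cb / u; set ga := fr f r a; set gx := fr f r x.
set Ia := I _ a; set Ix := I _ x => H ce.
rewrite ce; clearbody a x ga gx Ia Ix; nra.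
Qed.

Lemma irP u c : 0 < u -> 0 <= c -> c * fr f r (c / u) <= P f u r c.
Proof.
move=> u0 c0; rewrite /P /Q -/(I (fr f r) (c / u)).
have a0 : 0 <= c / u by rewrite divr_ge0 // ltW.
have := I_ge0 fr01 a0.
have ce : c = u * (c / u) by rewrite mulrCA divff ?mulr1 // gt_eqF.
move: ce; set a := c / u; set ga := fr f r a; set Ia := I _ a => ce H.
have := mulr_ge0 (ltW u0) H; rewrite ce; clearbody a ga Ia; nra.
Qed.

Lemma P0 u c : 0 < u -> 0 <= c -> P f u r c <= P f u r 0.
Proof.
move=> u0 c0; have := utilP u0 (lexx 0) c0.
by rewrite !mul0r !subr0.
Qed.
End Rfix.

Lemma P_mono u x r r' : 0 < u -> 0 <= x -> 0 < r -> r <= r' ->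
  P f u r x <= P f u r' x.
Proof.
move=> u0 x0 r0 rr.
have r'0 : 0 < r' by exact: lt_le_trans rr.
have a0 : 0 <= x / u by rewrite divr_ge0 // ltW.
rewrite /P; apply: ler_wpM2l; first exact: ltW.
rewrite /Q; apply: lerD.
  apply: ler_wpM2l => //; rewrite /fr; case: hf => _ h _ _; apply: h.
    by rewrite divr_ge0 // ltW.
  by rewrite ler_wpM2l // lef_pV2 ?posrE.
apply: le_Rintegral => //.
- by apply: (g_int (fr01 r0) (frni r0) (frM r0)) => // y /=;
    rewrite in_itv /= andbT; exact: le_trans.
- by apply: (g_int (fr01 r'0) (frni r'0) (frM r'0)) => // y /=;
    rewrite in_itv /= andbT; exact: le_trans.
move=> y /=; rewrite in_itv /= andbT => ay.
have y0 := le_trans a0 ay.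
rewrite /fr; case: hf => _ h _ _; apply: h; first by rewrite divr_ge0 // ltW.
by rewrite ler_wpM2l // lef_pV2 ?posrE.
Qed.
End Main.

Theorem lemma2 (R : realType) (f : R -> R) (I : finType) (B : R)
  (u c : I -> R) (r : I -> R) :
  std_alloc f -> 0 < B ->
  (forall i, 0 < u i) -> (forall i, 0 <= c i) ->
  (forall i, stopping_rate f u (zero_at c i) B (r i)) ->
  [/\ (forall i, c i * fr f (r i) (c i / u i) <= P f (u i) (r i) (c i)),
      (forall i (cb : R), 0 <= cb ->
         P f (u i) (r i) cb - c i * fr f (r i) (cb / u i)
         <= P f (u i) (r i) (c i) - c i * fr f (r i) (c i / u i))
    & \sum_(i : I) P f (u i) (r i) (c i) <= B].
Proof.
move=> hf B0 u0 c0 hr.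
have r0 i : 0 < r i by case: (hr i).
split.
- by move=> i; apply: irP.
- by move=> i cb cb0; apply: utilP.
case: (pickP (fun _ : I => true)) => [i0 _|none]; last first.
  by rewrite big_pred0 // ltW.
case: (@arg_maxP _ _ I i0 predT r isT) => j _ Hj.
have [_ [hB _]] := hr j.
rewrite -hB /total_pay.
apply: ler_sum => i _.
apply: (@le_trans _ _ (P f (u i) (r j) (c i))).
  by apply: P_mono => //; apply: Hj.
rewrite /zero_at; case: eqP => [->|_] //.
exact: P0.
Qed.
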